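(* Let $s\in C$ and let $\hat\kappa$ be a prime broadcast center of $T$ under $s$. It is known that the subgraph of $T$ induced by $B^s$ is a star. Then $\hat\kappa$ is a center of this star; equivalently, every vertex of $B^s\setminus\{\hat\kappa\}$ is adjacent to $\hat\kappa$ in $T$.
   Context: $T$ is a finite tree; each edge $(u,v)$ carries an interval $[w^-_{u,v},w^+_{u,v}]$ of non-negative reals. A scenario $s$ assigns to every edge a weight $w^s_{u,v}\in[w^-_{u,v},w^+_{u,v}]$; $C$ is the set of all scenarios. A constant $\rho>0$ is fixed. Broadcast time (postal model): for a subtree $G$ of $T$ and $u\in V(G)$, $b^s(u,G)=0$ if $u$ has no neighbour in $G$; otherwise, if $v_1,\dots,v_h$ are the neighbours of $u$ in $G$ and $G_{v}$ is the component of $G-u$ containing $v$, $b^s(u,G)=\min_{\pi}\max_{1\le k\le h}\big(k\rho+w^s_{u,v_{\pi(k)}}+b^s(v_{\pi(k)},G_{v_{\pi(k)}})\big)$ over permutations $\pi$. $B^s=\{u: b^s(u,T)\le b^s(v,T)\ \forall v\in V(T)\}$ is the set of broadcast centers. For distinct $x,y$, $T_{x,y}$ is the component of $T-x$ containing $y$ and $\bar T_{x,y}$ the subtree induced by $V(T)\setminus V(T_{x,y})$. A vertex $\hat\kappa\in B^s$ is a prime broadcast center under $s$ if $b^s(\hat\kappa,\bar T_{\hat\kappa,u})\ge b^s(u,\bar T_{u,\hat\kappa})$ for every neighbour $u$ of $\hat\kappa$. A star is a tree with one or two vertices, or with exactly one vertex of degree greater than one; in the last case that vertex is the center, in a one-vertex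 star the vertex is the center, and in a two-vertex star either vertex is a center. *)

(* Defs.v *)
From mathcomp Require Import all_boot all_order all_algebra.
Set Implicit Arguments. Unset Strict Implicit. Unset Printing Implicit Defensive.
Import Order.TTheory GRing.Theory Num.Theory.
Local Open Scope ring_scope.

Section Broadcast.
Variable R : realFieldType.
Variable V : finType.

(* A finite tree on vertex set V, given by an adjacency relation e.
   Edges are the unordered pairs {x,y} with e x y; the ordered pairs
   (x,y) with e x y therefore number 2 * (#edges). *)
Definition is_tree (e : rel V) : Prop :=
  [/\ (0 < #|V|)%N, symmetric e, irreflexive e,
      (forall x y, connect e x y) &
      #|[set p : V * V | e p.1 p.2]| = (2 * (#|V| - 1))%N].

Variable e : rel V.

Definition restr (S : {set V}) : rel V :=
  [rel x y | [&& x \in S, y \in S & e x y]].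

Definition comp (G : {set V}) (u v : V) : {set V} :=
  [set x in G :\ u | connect (restr (G :\ u)) v x].

Variable w : V -> V -> R.
Variable rho : R.

Definition order_cost (c : V -> R) (x0 : V) (p : seq V) : R :=
  \big[Num.max/0]_(i < size p) ((i.+1)%:R * rho + c (nth x0 p i)).

(* Broadcast time b(u,G) (postal model), computed with a fuel argument
   (fuel #|V| is always sufficient since components strictly shrink). *)
Fixpoint bcast (fuel : nat) (G : {set V}) (u : V) : R :=
  match fuel with
  | 0 => 0
  | n.+1 =>
    let N := [seq v <- enum G | e u v] in
    if N is [::] then 0 else
    let c := fun v => w u v + bcast n (comp G u v) v in
    \big[Num.min/order_cost c u N]_(p <- permutations N) order_cost c u p
  end.

Definition btime (G : {set V}) (u : V) : R := bcast #|V| G u.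

Definition bcenters : {set V} :=
  [set u | [forall v, btime setT u <= btime setT v]].

Definition Tsub (x y : V) : {set V} := comp setT x y.
Definition Tbar (x y : V) : {set V} := ~: Tsub x y.

Definition prime_bcenter (k : V) : Prop :=
  k \in bcenters /\
  forall u, e k u -> btime (Tbar u k) u <= btime (Tbar k u) k.

End Broadcast.

(* Main.v *)
Require Import Defs.
From mathcomp Require Import all_boot all_order all_algebra.
From mathcomp Require Import zify ring lra.
Set Implicit Arguments. Unset Strict Implicit.
Import Order.TTheory GRing.Theory Num.Theory.
Section Graph.
Variable V : finType.
Variable e : rel V.
Hypothesis esym : symmetric e.
Hypothesis eirr : irreflexive e.

Lemma conn_ind (r : rel V) (P : V -> Prop) a :
  P a -> (forall w z, P w -> r w z -> P z) -> forall z, connect r a z -> P z.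
Proof.
move=> Pa st z /connectP [p Hp ->]; elim: p a Pa Hp => //= x p IH a Pa /andP[ax Hp].
exact: (IH x (st a x Pa ax) Hp).
Qed.

Lemma restr_sym S : symmetric (restr e S).
Proof. by move=> x y; rewrite /restr /= esym andbCA. Qed.

Lemma restr_csym S x y : connect (restr e S) x y = connect (restr e S) y x.
Proof. by apply: sym_connect_sym; apply: restr_sym. Qed.

Lemma restr_mono (A B : {set V}) x y : A \subset B ->
  connect (restr e A) x y -> connect (restr e B) x y.
Proof.
move=> AB; apply: connect_sub => s t; rewrite /restr /= => /and3P[sA tA st]; apply: connect1.
by rewrite /restr /= (subsetP AB _ sA) (subsetP AB _ tA).
Qed.

Lemma conn_restrict (A B : {set V}) y : y \in B ->
  (forall w, connect (restr e A) y w -> w \in A -> w \in B) ->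
  forall z, connect (restr e A) y z -> connect (restr e B) y z.
Proof.
move=> yB H z cz.
suff: connect (restr e B) y z /\ connect (restr e A) y z by case.
move: z cz; apply: conn_ind; first by rewrite !connect0.
move=> w z [cB cA]; rewrite /restr /= => /and3P[wA zA wz].
have cA' : connect (restr e A) y z by apply: connect_trans cA (connect1 _); rewrite /restr /= wA zA.
split=> //; apply: connect_trans cB (connect1 _).
by rewrite /restr /= (H w cA wA) (H z cA' zA).
Qed.

Lemma inTsub x y z : (z \in Tsub e x y) = (z != x) && connect (restr e (setT :\ x)) y z.
Proof. by rewrite /Tsub /comp inE in_setD1 in_setT andbT. Qed.

Lemma restrTD x s t : restr e (setT :\ x) s t = [&& s != x, t != x & e s t].
Proof. by rewrite /restr /= !in_setD1 !in_setT !andbT. Qed.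

Lemma restrD (S : {set V}) x s t : restr e (S :\ x) s t = [&& s != x, t != x & restr e S s t].
Proof. rewrite /restr /= !in_setD1. by case: (s != x); case: (t != x); rewrite ?andbF. Qed.

Lemma ReachS (S : {set V}) x s z : connect (restr e S) s z ->
  [\/ z = x, connect (restr e (S :\ x)) s z /\ s != x
   | exists y, [/\ e x y, y \in S, y != x & connect (restr e (S :\ x)) y z]].
Proof.
move: z; apply: conn_ind.
  by case: (eqVneq s x) => [->|sx]; [constructor 1 | constructor 2; rewrite connect0].
move=> w z IH wz; have := wz; rewrite /restr /= => /and3P[wS zS ewz].
case: (eqVneq z x) => [->|zx]; first by constructor 1.
case: (eqVneq w x) => [ew|wx].
  by constructor 3; exists z; split=> //; rewrite -ew.
have wzx : restr e (S :\ x) w z by rewrite restrD zx wx wz.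
case: IH => [ew|[c sx]|[y [xy yS yx c]]].
- by rewrite ew eqxx in wx.
- by constructor 2; split=> //; apply: connect_trans c (connect1 _).
- by constructor 3; exists y; split=> //; apply: connect_trans c (connect1 _).
Qed.

End Graph.

Section Count.
Variable V : finType.
Variable r : rel V.
Hypothesis rsym : symmetric r.
Variable a : V.
Hypothesis rconn : forall z, connect r a z.

Fixpoint L k : {set V} :=
  if k is k'.+1 then L k' :|: [set y | [exists x in L k', r x y]] else [set a].

Lemma L_ex z : exists k, z \in L k.
Proof.
move: z (rconn z); apply: conn_ind; first by exists 0; rewrite /= set11.
move=> w z [k wk] wz; exists k.+1; rewrite /= in_setU inE; apply/orP; right.
by apply/existsP; exists w; rewrite wk.
Qed.

Definition dist z := ex_minn (L_ex z).

Lemma par_ex z : z != a -> exists x, (dist x < dist z)%N && r x z.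
Proof.
move=> za; rewrite /dist; case: ex_minnP => d zd dmin.
case: d zd dmin => [|d] /=.
  by rewrite inE (negbTE za).
rewrite in_setU inE => /orP[zd|/existsP[x /andP[xd xz]]] dmin.
  by have := dmin _ zd; rewrite ltnn.
exists x; rewrite xz andbT; case: ex_minnP => d' _ /(_ _ xd); lia.
Qed.

Definition par z := odflt a [pick x | (dist x < dist z)%N && r x z].

Lemma parP z : z != a -> (dist (par z) < dist z)%N && r (par z) z.
Proof.
move=> za; rewrite /par; case: pickP => [x //|H].
by have [x] := par_ex za; rewrite H.
Qed.

Lemma count_edges : (2 * (#|V| - 1) <= #|[set q : V * V | r q.1 q.2]|)%N.
Proof.
set D := [set z | z != a].
have cD : #|D| = (#|V| - 1)%N.
  have := cardsC1 a; rewrite /D.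
  have -> : [set z | z != a] = [set~ a] by apply/setP => z; rewrite !inE.
  lia.
set E1 := [set (par z, z) | z in D].
set E2 := [set (z, par z) | z in D].
have c1 : #|E1| = #|D| by apply: card_in_imset => x y _ _ [].
have c2 : #|E2| = #|D| by apply: card_in_imset => x y _ _ [].
have dis : E1 :&: E2 = set0.
  apply/setP => q; rewrite !inE; apply/negP => /andP[/imsetP[x xD ->] /imsetP[y yD [e1 e2]]].
  move: xD yD; rewrite !inE => xD yD.
  have := parP xD; have := parP yD; rewrite e1 -e2; case/andP => h1 _; case/andP => h2 _; lia.
have sub : E1 :|: E2 \subset [set q : V * V | r q.1 q.2].
  apply/subsetP => q; rewrite in_setU => /orP[/imsetP[x xD ->]|/imsetP[x xD ->]];
    rewrite inE /=; move: xD; rewrite inE => /parP /andP[_ h] //; by rewrite rsym.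
have := subset_leq_card sub; rewrite cardsU dis cards0 c1 c2 cD; lia.
Qed.
End Count.

Section Tree.
Variable V : finType.
Variable e : rel V.
Hypothesis tree : is_tree e.

Let esym : symmetric e. Proof. by case: tree. Qed.
Let eirr : irreflexive e. Proof. by case: tree. Qed.
Let econn : forall x y, connect e x y. Proof. by case: tree. Qed.

Lemma acyc a b : e a b ->
  ~ connect [rel s t | e s t && ~~ (((s == a) && (t == b)) || ((s == b) && (t == a)))] a b.
Proof.
move=> eab cab.
set e' := [rel s t | e s t && ~~ (((s == a) && (t == b)) || ((s == b) && (t == a)))].
have e'sym : symmetric e'.
  move=> s t; rewrite /e' /= esym; congr (_ && ~~ _).
  by case: (s == a); case: (t == b); case: (s == b); case: (t == a).
have conn' : forall z, connect e' a z.
  move=> z; move: z (econn a z); apply: conn_ind; first exact: connect0.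
  move=> w z cw wz.
  case: (boolP ((w == a) && (z == b))) => [/andP[_ /eqP -> //]|h1].
  case: (boolP ((w == b) && (z == a))) => [/andP[_ /eqP ->]|h2]; first exact: connect0.
  by apply: connect_trans cw (connect1 _); rewrite /e' /= wz negb_or h1 h2.
have := count_edges e'sym conn'.
have ab : a != b by apply/eqP => ab; move: eab; rewrite ab eirr.
have -> : [set q : V * V | e' q.1 q.2] = [set q : V * V | e q.1 q.2] :\ (a, b) :\ (b, a).
  apply/setP => [[s t]]; rewrite !inE /= !xpair_eqE.
  by case: (e s t); case: (s == a); case: (t == b); case: (s == b); case: (t == a).
case: tree => _ _ _ _ cE.
have := cardsD1 (a, b) [set q : V * V | e q.1 q.2].
have := cardsD1 (b, a) ([set q : V * V | e q.1 q.2] :\ (a, b)).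
rewrite !inE /= !xpair_eqE eab (esym b a) eab (negbTE ab) /= cE.
have : (0 < #|V|)%N by case: tree.
have : (1 < #|V|)%N.
  by have := max_card [set a; b]; rewrite cards2 ab.
rewrite andbF /=; lia.
Qed.
Lemma disj a b z : e a b -> connect (restr e (setT :\ b)) a z ->
  connect (restr e (setT :\ a)) b z -> False.
Proof.
move=> eab c1 c2; have := @acyc a b eab; apply; apply: connect_trans (_ : connect _ z b).
  apply: connect_sub c1 => s t; rewrite restrTD => /and3P[sb tb st]; apply: connect1.
  by rewrite /= st (negbTE sb) (negbTE tb) !andbF.
rewrite (restr_csym esym) in c2.
apply: connect_sub c2 => s t; rewrite restrTD => /and3P[sb tb st]; apply: connect1.
by rewrite /= st (negbTE sb) (negbTE tb) !andbF.
Qed.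

Lemma Tsub_disj a b z : e a b -> z \in Tsub e b a -> z \in Tsub e a b -> False.
Proof.
by move=> eab; rewrite !inTsub => /andP[_ c1] /andP[_ c2]; apply: (@disj a b z eab c1 c2).
Qed.

Lemma neq_of_e a b : e a b -> a != b.
Proof. by move=> eab; apply/eqP => ab; move: eab; rewrite ab eirr. Qed.

Lemma TbarE a b : e a b -> ~: Tsub e b a = Tsub e a b.
Proof.
move=> eab; have ab := @neq_of_e a b eab.
apply/setP => z; rewrite inE; apply/idP/idP; last first.
  by move=> zab; apply/negP => zba; apply: (@Tsub_disj a b z eab zba zab).
move=> nz.
have c : connect (restr e setT) a z.
  by apply: connect_sub (econn a z) => s t st; apply: connect1; rewrite /restr /= !in_setT.
case: (ReachS b c) => [zb|[c' _]|[y [by_ yT yb cy]]].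
- by rewrite inTsub zb eq_sym ab connect0.
- case: (eqVneq z b) => [zb|zb]; first by rewrite inTsub zb eq_sym ab connect0.
  by move: nz; rewrite inTsub zb c'.
- case: (eqVneq z b) => [zb|zb]; first by rewrite inTsub zb eq_sym ab connect0.
  case: (eqVneq y a) => [ya|ya].
    by move: nz; rewrite inTsub zb -ya cy.
  have H : forall w, connect (restr e (setT :\ b)) y w -> w \in setT :\ b -> w \in setT :\ a.
    move=> w cw _; rewrite in_setD1 in_setT andbT; apply/eqP => wa.
    apply: (@disj a b y eab).
      by rewrite (restr_csym esym) -wa.
    by apply: connect1; rewrite restrTD ya (eq_sym b a) ab by_.
  have cz := conn_restrict (_ : y \in setT :\ a) H cy.
  rewrite inTsub; apply/andP; split.
    by move: (H z cy); rewrite !in_setD1 !in_setT !andbT zb; apply.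
  apply: connect_trans (connect1 _) (cz _).
    by rewrite restrTD ya (eq_sym b a) ab.
  by rewrite in_setD1 ya.
Qed.

Definition rooted (G : {set V}) u := G = setT \/ exists2 p, e p u & G = Tsub e p u.

Lemma compG G u y : rooted G u -> y \in G -> e u y -> Defs.comp e G u y = Tsub e u y.
Proof.
case=> [->|[p pu ->]] //= yG uy.
have up : u != p by rewrite eq_sym; apply: neq_of_e.
have yu : y != u by rewrite eq_sym; apply: neq_of_e.
have := yG; rewrite inTsub => /andP[yp0 cuy].
have noP : forall w, connect (restr e (setT :\ u)) y w -> w != p.
  move=> w cw; apply/eqP => wp; apply: (@disj u p y); first by rewrite esym.
    exact: cuy.
  by rewrite (restr_csym esym) -wp.
have H1 : forall w, connect (restr e (setT :\ u)) y w -> connect (restr e (setT :\ p)) y w.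
  move=> w0; apply: conn_restrict; first by rewrite in_setD1 yp0 in_setT.
  by move=> w cw _; rewrite in_setD1 in_setT andbT noP.
apply/setP => z; rewrite /Defs.comp inE inTsub; apply/idP/idP.
  case/andP => zG cz; rewrite in_setD1 in zG; case/andP: zG => -> _ /=.
  apply: restr_mono cz; apply/subsetP => w; rewrite !in_setD1 in_setT andbT; by case/andP.
case/andP => zu cz; apply/andP; split.
  rewrite in_setD1 zu /= inTsub (noP z cz) /=.
  exact: connect_trans cuy (H1 z cz).
apply: conn_restrict cz; first by rewrite in_setD1 yu.
move=> w cw; rewrite !in_setD1 in_setT andbT => wu; rewrite wu /= inTsub (noP w cw) /=.
exact: connect_trans cuy (H1 w cw).
Qed.

Lemma comp_sub G u y : Defs.comp e G u y \subset G :\ u.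
Proof. by apply/subsetP => z; rewrite /Defs.comp inE => /andP[]. Qed.

Lemma step G u a q : rooted G u -> a \in G -> e q a -> u \in Tsub e a q -> u != q ->
  exists y, [/\ e u y, y \in G, a \in Tsub e u y, q \in Tsub e u y & y \in Tsub e a q].
Proof.
move=> rG aG qa; rewrite inTsub => /andP[ua cqu] uq.
rewrite (restr_csym esym) in cqu.
case: (ReachS u cqu) => [qu|[_ /eqP //]|[y [uy yS yu cy]]]; first by rewrite qu eqxx in uq.
have ya : y != a by move: yS; rewrite in_setD1 => /andP[].
have cy' : connect (restr e (setT :\ u)) y q.
  by apply: restr_mono cy; apply/subsetP => w; rewrite !in_setD1 !in_setT => /and3P[-> _ _].
have cya : connect (restr e (setT :\ a)) y q.
  by apply: restr_mono cy; apply/subsetP => w; rewrite !in_setD1 !in_setT => /and3P[_ -> _].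
have qu : q != u by rewrite eq_sym.
have au : a != u by rewrite eq_sym.
have aT : a \in Tsub e u y.
  rewrite inTsub au /=; apply: connect_trans cy' (connect1 _).
  by rewrite restrTD qu au qa.
exists y; split=> //.
- case: rG => [->|[p pu GE]]; first by rewrite in_setT.
  rewrite GE inTsub; have yp : y != p.
    apply/eqP => yp; apply: (@Tsub_disj u p a); first by rewrite esym.
      by rewrite -GE.
    by rewrite -yp.
  rewrite yp /=; apply: connect1; rewrite restrTD yp uy andbT.
  by rewrite eq_sym (neq_of_e pu).
- by rewrite inTsub qu.
- by rewrite inTsub ya /= (restr_csym esym).
Qed.

End Tree.

Local Open Scope ring_scope.

Section Big.
Variable R : realFieldType.
Variable V : finType.
Variable rho : R.
Hypothesis rho0 : 0 <= rho.

Lemma bigmax_ge (I : eqType) (r : seq I) (F : I -> R) i0 :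
  i0 \in r -> F i0 <= \big[Num.max/0]_(i <- r) F i.
Proof.
elim: r => //= j r IH; rewrite in_cons big_cons le_max => /orP[/eqP ->|/IH ->].
  by rewrite lexx. by rewrite orbT.
Qed.

Lemma bigmax_ge0 (I : eqType) (r : seq I) (F : I -> R) : 0 <= \big[Num.max/0]_(i <- r) F i.
Proof. by elim: r => [|j r IH]; rewrite ?big_nil ?big_cons ?le_max ?IH ?orbT. Qed.

Lemma bigmax_shift (I : eqType) (r : seq I) (F G : I -> R) :
  (forall i, F i <= rho + G i) ->
  \big[Num.max/0]_(i <- r) F i <= rho + \big[Num.max/0]_(i <- r) G i.
Proof.
move=> H; elim: r => [|j r IH]; first by rewrite !big_nil addr0.
rewrite !big_cons ge_max; apply/andP; split.
  by apply: le_trans (H j) _; rewrite lerD2l le_max lexx.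
by apply: le_trans IH _; rewrite lerD2l le_max lexx orbT.
Qed.

Lemma bigmin_le (I : eqType) (s : seq I) (f : I -> R) x0 i :
  i \in s -> \big[Num.min/x0]_(j <- s) f j <= f i.
Proof.
elim: s => //= j s IH; rewrite in_cons big_cons ge_min => /orP[/eqP ->|/IH ->].
  by rewrite lexx. by rewrite orbT.
Qed.

Lemma bigmin_ge (I : eqType) (s : seq I) (f : I -> R) x0 z :
  z <= x0 -> (forall i, i \in s -> z <= f i) -> z <= \big[Num.min/x0]_(j <- s) f j.
Proof.
move=> zx H; elim: s H => [|j s IH] H; first by rewrite big_nil.
rewrite big_cons le_min H ?mem_head //=; apply: IH => i js; apply: H; by rewrite in_cons js orbT.
Qed.

Lemma bigmin_att (I : eqType) (s : seq I) (f : I -> R) x0 :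
  \big[Num.min/x0]_(j <- s) f j = x0 \/ exists2 i, i \in s & \big[Num.min/x0]_(j <- s) f j = f i.
Proof.
elim: s => [|j s IH]; first by left; rewrite big_nil.
rewrite big_cons; case: (leP (f j) (\big[Num.min/x0]_(j0 <- s) f j0)) => h.
  by right; exists j; rewrite ?mem_head.
case: IH => [->|[i js ->]]; first by left.
by right; exists i; rewrite // in_cons js orbT.
Qed.

Lemma oc_ge0 (c : V -> R) x p : 0 <= order_cost rho c x p.
Proof. exact: bigmax_ge0. Qed.

Lemma oc_eq (c c' : V -> R) x p : {in p, c =1 c'} -> order_cost rho c x p = order_cost rho c' x p.
Proof.
move=> H; apply: eq_bigr => i _; rewrite H //; apply: mem_nth; exact: ltn_ord.
Qed.

Lemma oc_ge (c : V -> R) x p y : y \in p -> rho + c y <= order_cost rho c x p.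
Proof.
move=> yp; have ip : (index y p < size p)%N by rewrite index_mem.
pose i := Ordinal ip.
apply: le_trans (bigmax_ge _ (mem_index_enum i)).
rewrite /= nth_index // lerD2r -[X in X <= _]mul1r ler_wpM2r // ler1n //.
Qed.

Lemma oc_nil (c : V -> R) x : order_cost rho c x [::] = 0.
Proof. by rewrite /order_cost big_ord0. Qed.

Lemma oc_cons (c : V -> R) x y p :
  order_cost rho c x (y :: p) <= Num.max (rho + c y) (rho + order_cost rho c x p).
Proof.
rewrite /order_cost big_ord_recl /= mul1r.
apply: le_max2; first exact: lexx.
apply: bigmax_shift => i; rewrite /= add0n -[(bump 0 i).+1]/(i.+1.+1) -nat1r mulrDl mul1r -addrA; exact: lexx.
Qed.

Definition bmin (c : V -> R) u (N : seq V) :=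
  if N is [::] then 0 else
  \big[Num.min/order_cost rho c u N]_(p <- permutations N) order_cost rho c u p.

Lemma bmin_eq c c' u N : {in N, c =1 c'} -> bmin c u N = bmin c' u N.
Proof.
move=> H; rewrite /bmin; case: N H => // h t H.
rewrite (oc_eq (c' := c')) //; apply: eq_big_seq => p.
rewrite mem_permutations => pN; apply: oc_eq => z zp; apply: H; by rewrite -(perm_mem pN).
Qed.

Lemma bmin_ge c u N y : y \in N -> rho + c y <= bmin c u N.
Proof.
rewrite /bmin; case: N => // h t yN; apply: bigmin_ge; first exact: oc_ge.
by move=> p; rewrite mem_permutations => pN; apply: oc_ge; rewrite (perm_mem pN).
Qed.

Lemma bmin_le c u N p : perm_eq p N -> bmin c u N <= order_cost rho c u p.
Proof.
rewrite /bmin; case: N => [|h t] pN.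
  by move: pN => /perm_nilP ->; rewrite oc_nil.
by apply: bigmin_le; rewrite mem_permutations.
Qed.

Lemma bmin_att c u N : exists2 p, perm_eq p N & bmin c u N = order_cost rho c u p.
Proof.
rewrite /bmin; case: N => [|h t]; first by exists [::]; rewrite ?oc_nil.
case: (bigmin_att (permutations (h :: t)) (order_cost rho c u) (order_cost rho c u (h :: t))).
  by move=> ->; exists (h :: t).
by move=> [p]; rewrite mem_permutations => pN ->; exists p.
Qed.

Lemma bmin_ge0 c u N : bmin c u N >= 0.
Proof. by have [p _ ->] := bmin_att c u N; apply: oc_ge0. Qed.
End Big.

Section Main.
Variable R : realFieldType.
Variable V : finType.
Variable e : rel V.
Variable ws : V -> V -> R.
Variable rho : R.
Hypothesis tree : is_tree e.
Hypothesis rho_gt0 : 0 < rho.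
Hypothesis wpos : forall u v, e u v -> 0 <= ws u v.
Hypothesis wsym : forall u v, e u v -> ws u v = ws v u.

Let rho0 : 0 <= rho. Proof. exact: ltW. Qed.
Let esym : symmetric e. Proof. by case: tree. Qed.

Definition nbrs (G : {set V}) u := [seq v <- enum G | e u v].
Definition cf n (G : {set V}) u := fun v => ws u v + bcast e ws rho n (Defs.comp e G u v) v.

Lemma bcastS n (G : {set V}) u : bcast e ws rho n.+1 G u = bmin rho (cf n G u) u (nbrs G u).
Proof. by []. Qed.

Lemma mem_nbrs (G : {set V}) u v : (v \in nbrs G u) = (v \in G) && e u v.
Proof. by rewrite mem_filter mem_enum andbC. Qed.

Lemma bcast_ge0 n (G : {set V}) u : 0 <= bcast e ws rho n G u.
Proof. by case: n => [|n] //; rewrite bcastS; apply: bmin_ge0. Qed.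

Lemma in_comp (G : {set V}) u v : v \in G -> e u v -> v \in Defs.comp e G u v.
Proof.
move=> vG uv; rewrite /Defs.comp inE in_setD1 vG connect0 andbT andbT eq_sym.
by apply: neq_of_e tree _ _ uv.
Qed.

Lemma card_comp (G : {set V}) u v : v \in G -> e u v ->
  (#|Defs.comp e G u v :\ v| < #|G :\ u|)%N.
Proof.
move=> vG uv; have := cardsD1 v (Defs.comp e G u v); rewrite in_comp //.
have := subset_leq_card (@comp_sub V e G u v); lia.
Qed.

Lemma FI n (G : {set V}) u : (#|G :\ u| < n)%N -> bcast e ws rho n G u = bcast e ws rho n.+1 G u.
Proof.
elim: n G u => [//|n IH] G u h; rewrite (bcastS n) (bcastS n.+1).
apply: bmin_eq => v; rewrite mem_nbrs => /andP[vG uv]; rewrite /cf; congr (_ + _).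
apply: IH; have := card_comp vG uv; lia.
Qed.

Lemma FIeq n m (G : {set V}) u : (#|G :\ u| < n)%N -> (#|G :\ u| < m)%N ->
  bcast e ws rho n G u = bcast e ws rho m G u.
Proof.
have H : forall n k, (#|G :\ u| < n)%N -> bcast e ws rho n G u = bcast e ws rho (n + k) G u.
  move=> n0 k h; elim: k => [|k IH]; first by rewrite addn0.
  by rewrite IH addnS FI //; lia.
move=> hn hm; case: (leqP n m) => nm.
  by rewrite (H n (m - n)%N hn) subnKC.
by rewrite (H m (n - m)%N hm) subnKC // ltnW.
Qed.

Lemma B1 n (G : {set V}) u y : y \in G -> e u y ->
  rho + ws u y + bcast e ws rho n (Defs.comp e G u y) y <= bcast e ws rho n.+1 G u.
Proof.
move=> yG uy; rewrite bcastS -addrA; apply: bmin_ge => //.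
by rewrite mem_nbrs yG uy.
Qed.

Lemma Down n (G : {set V}) u a q : rooted e G u -> u \in G -> (#|G| <= n)%N ->
  a \in G -> e q a -> u \in Tsub e a q ->
  rho + ws q a + bcast e ws rho #|V| (Tsub e q a) a + (if u == q then 0 else rho)
  <= bcast e ws rho n G u.
Proof.
elim: n G u => [|n IH] G u rG uG hG aG qa uT.
  by have := cardsD1 u G; rewrite uG; lia.
case: (eqVneq u q) => [uq|uq].
  subst u; rewrite addr0.
  have B := B1 n aG qa; rewrite (compG tree rG aG qa) in B.
  suff -> : bcast e ws rho #|V| (Tsub e q a) a = bcast e ws rho n (Tsub e q a) a by [].
  apply: FIeq; last first.
    have := card_comp aG qa; rewrite (compG tree rG aG qa).
    by have := cardsD1 q G; rewrite uG; lia.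
  have := cardsD1 a (Tsub e q a); have := max_card (Tsub e q a).
  have -> : a \in Tsub e q a by rewrite inTsub connect0 andbT eq_sym; apply: neq_of_e tree _ _ qa.
  lia.
have [y [uy yG aT qT yT]] := step tree rG aG qa uT uq.
have B := B1 n yG uy; rewrite (compG tree rG yG uy) in B.
have yin : y \in Tsub e u y by rewrite inTsub connect0 andbT eq_sym; apply: neq_of_e tree _ _ uy.
have rG' : rooted e (Tsub e u y) y by right; exists u.
have hG' : (#|Tsub e u y| <= n)%N.
  have h1 := subset_leq_card (@comp_sub V e G u y); rewrite (compG tree rG yG uy) in h1.
  have h2 := cardsD1 u G; rewrite uG add1n in h2.
  by apply: leq_trans h1 _; rewrite -ltnS -h2.
have := IH _ _ rG' yin hG' aT qa yT.
have w0 := wpos uy.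
have i0 : 0 <= (if y == q then 0 else rho) by case: (y == q).
move: i0 B; set X := bcast _ _ _ _ _ y; set Y := bcast _ _ _ #|V| _ a.
set Z := bcast _ _ _ _ G u; set I := (if y == q then _ else _).
move=> i1 B C; clearbody X Y Z I.
apply: le_trans B; apply: (@le_trans _ _ (X + rho)).
  by rewrite lerD2r; apply: le_trans C; rewrite lerDl.
by rewrite addrC addrAC lerDl.
Qed.

Lemma Up k x1 : e k x1 ->
  btime e ws rho (Tbar e x1 k) x1 <= btime e ws rho (Tbar e k x1) k ->
  btime e ws rho setT k <= rho + ws k x1 + btime e ws rho (Tbar e k x1) k.
Proof.
move=> kx pr.
have [n EV] : exists n, #|V| = n.+1.
  by case: tree => h _ _ _ _; exists #|V|.-1; rewrite prednK.
have kx' : e x1 k by rewrite esym.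
have xk : x1 != k by apply: neq_of_e tree _ _ kx'.
have GE : Tbar e k x1 = Tsub e x1 k by rewrite /Tbar (TbarE tree kx').
have GE' : Tbar e x1 k = Tsub e k x1 by rewrite /Tbar (TbarE tree kx).
move: pr; rewrite /btime GE GE' EV !bcastS.
set G := Tsub e x1 k.
have rG : rooted e G k by right; exists x1.
have [p pN ->] := bmin_att rho (cf n G k) k (nbrs G k).
move=> pr.
have x1G : x1 \notin G by rewrite inTsub eqxx.
have uN' : uniq (nbrs G k) by rewrite filter_uniq // enum_uniq.
have pp : perm_eq (x1 :: p) (nbrs setT k).
  apply: uniq_perm.
  - rewrite /= (perm_uniq pN) uN' andbT (perm_mem pN) mem_nbrs.
    by rewrite (negbTE x1G).
  - by rewrite filter_uniq // enum_uniq.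
  move=> z; rewrite in_cons (perm_mem pN) !mem_nbrs in_setT /=.
  case: (eqVneq z x1) => [->|zx] /=; first by rewrite kx.
  case kz: (e k z); rewrite ?andbF ?andbT //.
  rewrite inTsub zx /=; apply: connect1; rewrite restrTD zx kz andbT.
  by rewrite andbT eq_sym.
apply: le_trans (@bmin_le _ _ rho _ _ _ _ pp) _.
apply: le_trans (oc_cons rho0 _ _ _ _) _.
have E1 : order_cost rho (cf n setT k) k p = order_cost rho (cf n G k) k p.
  apply: oc_eq => z zp; rewrite /cf; congr (_ + _).
  move: zp; rewrite (perm_mem pN) mem_nbrs => /andP[zG kz].
  rewrite (compG tree rG zG kz) (compG tree (or_introl erefl) (in_setT z) kz) //.
have E2 : cf n setT k x1 = ws k x1 + bcast e ws rho n.+1 (Tsub e k x1) x1.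
  rewrite /cf; congr (_ + _); apply: FI.
  have := card_comp (in_setT x1) kx; rewrite -[Defs.comp _ _ _ _]/(Tsub e k x1).
  have := cardsD1 k [set: V]; rewrite in_setT cardsT EV; lia.
rewrite E1 E2 ge_max; apply/andP; split.
  by rewrite -addrA lerD2l lerD2l.
rewrite -addrA lerD2l lerDr; exact: wpos.
Qed.

End Main.

Local Open Scope ring_scope.

Theorem lemma6 (R : realFieldType) (V : finType) (e : rel V)
  (wlo whi : V -> V -> R) (rho : R) (ws : V -> V -> R) (k : V) :
  is_tree e ->
  0 < rho ->
  (forall u v, e u v -> 0 <= wlo u v /\ wlo u v <= whi u v) ->
  (forall u v, e u v -> wlo u v = wlo v u /\ whi u v = whi v u) ->
  (* ws is a scenario: a symmetric weight in each edge interval *)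
  (forall u v, e u v -> wlo u v <= ws u v /\ ws u v <= whi u v) ->
  (forall u v, e u v -> ws u v = ws v u) ->
  prime_bcenter e ws rho k ->
  forall v, v \in bcenters e ws rho -> v != k -> e k v.
Proof.
move=> tree rhopos hlo _ hws wsym [kB pr] v vB vk.
case kv: (e k v) => //; exfalso.
have wpos : forall u w, e u w -> 0 <= ws u w.
  move=> u w uw; case: (hlo u w uw) => h _; case: (hws u w uw) => h' _; exact: le_trans h h'.
have cT : connect (restr e setT) k v.
  case: tree => _ _ _ econn _.
  by apply: connect_sub (econn k v) => s t st; apply: connect1; rewrite /restr /= !in_setT.
case: (ReachS k cT) => [vk'|[_ /eqP //]|[x1 [kx _ xk cx]]]; first by rewrite vk' eqxx in vk.
have vT : v \in Tsub e k x1 by rewrite inTsub vk.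
have xk' : e x1 k by case: tree => _ esym _ _ _; rewrite esym.
have D := Down tree rhopos wpos (n := #|V|) (G := setT) (u := v) (or_introl erefl)
  (in_setT v) (max_card _) (in_setT k) xk' vT.
have vx : (v == x1) = false by apply/negP => /eqP vx; move: kv; rewrite vx kx.
rewrite vx in D.
have U := Up tree rhopos wpos kx (pr x1 kx).
have Hv : btime e ws rho setT v <= btime e ws rho setT k.
  by move: vB; rewrite inE => /forallP /(_ k).
have TE : Tsub e x1 k = Tbar e k x1 by rewrite /Tbar (TbarE tree xk').
rewrite TE (wsym _ _ xk') in D.
move: D U Hv; rewrite /btime.
generalize (bcast e ws rho #|V| (Tbar e k x1) k) => A.
generalize (bcast e ws rho #|V| setT v) => Bv.
generalize (bcast e ws rho #|V| setT k) => Bk.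
move=> D U Hv; lra.
Qed.
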